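(* Under the hypotheses of Theorem 5.2 (stated below), let $(u_n)_{n\in\mathbb N}$ and $(v_n)_{n\in\mathbb N}$ be two positive solutions with the same $x_0$ (so set $u_0=v_0=x_0$), and let $\varepsilon_n=u_n-v_n$ for $n\ge0$. Then $2|\varepsilon_n|\le|\varepsilon_{n+1}|+|\varepsilon_{n-1}|$ for all $n\in\mathbb N$. Hypotheses: $\ell_n>0$, $\sigma_{n,0}>0$, $\kappa_n\in\mathbb R$, $\sigma_{n,\pm1}\ge0$ for $n\in\mathbb N$; $\sigma_n=\max(\sigma_{n,-1},\sigma_{n,1})$; $\mathbb N=\mathbb N_a\cup\mathbb N_b$ disjointly with $2\sigma_n\le\sigma_{n,0}$ for $n\in\mathbb N_a$ and with $\sigma_n\le\sigma_{n,0}<2\sigma_n$ and $-2(\sigma_{n,0}-\sigma_n)\sqrt{\ell_n}\le\kappa_n\sqrt{2\sigma_n-\sigma_{n,0}}$ for $n\in\mathbb N_b$; and, if $1\in\mathbb N_b$, $-2(\sigma_{1,0}-\sigma_1)\sqrt{\ell_1}\le(\sigma_{1,-1}x_0+\kappa_1)\sqrt{2\sigma_1-\sigma_{1,0}}$.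
   Context: $\mathbb N=\{1,2,3,\dots\}$. A positive solution with given $x_0\in\mathbb R$ is a sequence $(x_n)_{n\in\mathbb N}$ of positive reals satisfying $\ell_n = x_n(\sigma_{n,1}x_{n+1}+\sigma_{n,0}x_n+\sigma_{n,-1}x_{n-1})+\kappa_n x_n$ for all $n\in\mathbb N$. *)

(* Defs.v *)
From Stdlib Require Import Reals.
Open Scope R_scope.

(* Sequences are indexed by nat; index 0 holds the given value x_0, and the
   paper's N = {1,2,3,...} corresponds to indices n >= 1.
   l, s1, s0, sm1, k stand for l_n, sigma_{n,1}, sigma_{n,0}, sigma_{n,-1}, kappa_n
   (their values at index 0 are irrelevant). *)

Definition sigmaMax (s1 sm1 : nat -> R) (n : nat) : R := Rmax (sm1 n) (s1 n).

Definition positive_solution (l s1 s0 sm1 k : nat -> R) (x0 : R) (x : nat -> R) : Prop :=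
  x 0%nat = x0 /\
  (forall n : nat, (1 <= n)%nat -> 0 < x n) /\
  (forall n : nat, (1 <= n)%nat ->
     l n = x n * (s1 n * x (S n) + s0 n * x n + sm1 n * x (pred n)) + k n * x n).

(* Main.v *)
Require Import Defs.
From Stdlib Require Import Reals Lra Lia Psatz Classical.
Open Scope R_scope.

Lemma bound_lemma (s0 sg K l x : R) :
  0 < l -> 0 < x -> sg <= s0 -> s0 < 2 * sg ->
  s0 * x * x + K * x <= l ->
  - 2 * (s0 - sg) * sqrt l <= K * sqrt (2 * sg - s0) ->
  (2 * sg - s0) * (x * x) <= l.
Proof.
  intros hl hx h1 h2 hq hK.
  set (c := 2 * sg - s0) in *.
  assert (hc : 0 < c) by (unfold c; lra).
  set (S := sqrt l) in *. set (T := sqrt c) in *.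
  assert (hS2 : S * S = l) by (apply sqrt_sqrt; lra).
  assert (hT2 : T * T = c) by (apply sqrt_sqrt; lra).
  assert (hS : 0 < S) by (apply sqrt_lt_R0; lra).
  assert (hT : 0 < T) by (apply sqrt_lt_R0; lra).
  assert (hw : T * x <= S).
  { destruct (Rle_lt_dec (T * x) S) as [h|h]; [exact h|exfalso].
    set (w := T * x) in *.
    assert (e1 : c * (s0 * x * x + K * x) <= c * l) by (apply Rmult_le_compat_l; lra).
    assert (e2 : c * (s0 * x * x + K * x) = s0 * (w * w) + (K * T) * w).
    { unfold w. rewrite <- hT2. ring. }
    assert (e3 : (K * T) * w >= - 2 * (s0 - sg) * S * w).
    { assert (0 < w) by (unfold w; nra). nra. }
    assert (e4 : s0 * (w*w) - 2 * (s0 - sg) * S * w - c * (S * S) <= 0) by nra.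
    assert (e5 : s0 * (w*w) - 2 * (s0 - sg) * S * w - c * (S * S)
                 = (w - S) * (s0 * w + c * S)) by (unfold c; ring).
    assert (0 < (w - S) * (s0 * w + c * S)).
    { apply Rmult_lt_0_compat; [lra|]. assert (0 < w) by lra. nra. }
    lra. }
  assert (hw0 : 0 <= T * x) by nra.
  assert ((T * x) * (T * x) <= S * S) by nra.
  replace ((T * x) * (T * x)) with (c * (x * x)) in H by (rewrite <- hT2; ring).
  lra.
Qed.

Theorem mainTheorem5
  (l s1 s0 sm1 k : nat -> R) (x0 : R) (inB : nat -> Prop)
  (hl : forall n : nat, (1 <= n)%nat -> 0 < l n)
  (hs0 : forall n : nat, (1 <= n)%nat -> 0 < s0 n)
  (hs1 : forall n : nat, (1 <= n)%nat -> 0 <= s1 n)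
  (hsm1 : forall n : nat, (1 <= n)%nat -> 0 <= sm1 n)
  (hA : forall n : nat, (1 <= n)%nat -> ~ inB n -> 2 * sigmaMax s1 sm1 n <= s0 n)
  (hB : forall n : nat, (1 <= n)%nat -> inB n ->
        sigmaMax s1 sm1 n <= s0 n /\ s0 n < 2 * sigmaMax s1 sm1 n /\
        - 2 * (s0 n - sigmaMax s1 sm1 n) * sqrt (l n)
          <= k n * sqrt (2 * sigmaMax s1 sm1 n - s0 n))
  (hB1 : inB 1%nat ->
        - 2 * (s0 1%nat - sigmaMax s1 sm1 1%nat) * sqrt (l 1%nat)
          <= (sm1 1%nat * x0 + k 1%nat) * sqrt (2 * sigmaMax s1 sm1 1%nat - s0 1%nat))
  (u v : nat -> R)
  (hu : positive_solution l s1 s0 sm1 k x0 u)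
  (hv : positive_solution l s1 s0 sm1 k x0 v) :
  forall n : nat, (1 <= n)%nat ->
    2 * Rabs (u n - v n) <= Rabs (u (S n) - v (S n)) + Rabs (u (pred n) - v (pred n)).
Proof.
  intros n hn.
  destruct hu as [hu0 [hupos hueq]]. destruct hv as [hv0 [hvpos hveq]].
  set (sg := sigmaMax s1 sm1 n).
  assert (hsg1 : s1 n <= sg) by (unfold sg, sigmaMax; apply Rmax_r).
  assert (hsg2 : sm1 n <= sg) by (unfold sg, sigmaMax; apply Rmax_l).
  pose proof (hl n hn) as Hl. pose proof (hs0 n hn) as Hs0.
  pose proof (hs1 n hn) as Hs1. pose proof (hsm1 n hn) as Hsm1.
  pose proof (hupos n hn) as Hu. pose proof (hvpos n hn) as Hv.
  pose proof (hupos (S n) ltac:(lia)) as Hu1. pose proof (hvpos (S n) ltac:(lia)) as Hv1.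
  assert (key : (2 * sg - s0 n) * (u n * v n) <= l n).
  { destruct (classic (inB n)) as [hb|hb].
    - destruct (hB n hn hb) as [b1 [b2 b3]]. fold sg in b1, b2, b3.
      assert (gen : forall x : nat -> R, x 0%nat = x0 -> (forall m, (1 <= m)%nat -> 0 < x m) ->
                (forall m, (1 <= m)%nat -> l m = x m * (s1 m * x (S m) + s0 m * x m + sm1 m * x (pred m)) + k m * x m) ->
                (2 * sg - s0 n) * (x n * x n) <= l n).
      { intros x hx0 hxp hxe.
        pose proof (hxe n hn) as E. pose proof (hxp n hn) as Px. pose proof (hxp (S n) ltac:(lia)) as Px1.
        destruct (Nat.eq_dec n 1) as [->|hn2].
        - apply (bound_lemma (s0 1%nat) sg (sm1 1%nat * x0 + k 1%nat)); try lra.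
          + simpl in E. rewrite hx0 in E. assert (0 <= s1 1%nat * x 2%nat * x 1%nat) by (apply Rmult_le_pos; [apply Rmult_le_pos|]; lra). nra.
          + unfold sg; apply hB1; exact hb.
        - apply (bound_lemma (s0 n) sg (k n)); try lra.
          pose proof (hxp (pred n) ltac:(lia)). assert (0 <= s1 n * x (S n) * x n) by (apply Rmult_le_pos; [apply Rmult_le_pos|]; lra). assert (0 <= sm1 n * x (pred n) * x n) by (apply Rmult_le_pos; [apply Rmult_le_pos|]; lra). nra. }
      pose proof (gen u hu0 hupos hueq). pose proof (gen v hv0 hvpos hveq).
      assert (0 < 2 * sg - s0 n) by lra.
      set (c := 2 * sg - s0 n) in *.
      assert ((c * (u n * v n)) * (c * (u n * v n)) <= l n * l n).
      { replace ((c * (u n * v n)) * (c * (u n * v n))) with ((c * (u n * u n)) * (c * (v n * v n))) by ring.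
        apply Rmult_le_compat; nra. }
      assert (0 <= c * (u n * v n)) by (apply Rmult_le_pos; nra).
      destruct (Rle_lt_dec (c * (u n * v n)) (l n)) as [hh|hh]; [exact hh|].
      assert (l n * l n < c * (u n * v n) * (c * (u n * v n))) by (apply Rmult_le_0_lt_compat; lra).
      lra.
    - pose proof (hA n hn hb). fold sg in H.
      assert (0 < u n * v n) by (apply Rmult_lt_0_compat; lra).
      assert ((2 * sg - s0 n) * (u n * v n) <= 0) by (replace ((2 * sg - s0 n) * (u n * v n)) with (- ((s0 n - 2 * sg) * (u n * v n))) by ring; assert (0 <= (s0 n - 2 * sg) * (u n * v n)) by (apply Rmult_le_pos; lra); lra). lra. }
  pose proof (hueq n hn) as Eu. pose proof (hveq n hn) as Ev.
  set (e := u n - v n). set (ep := u (S n) - v (S n)). set (em := u (pred n) - v (pred n)).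
  assert (Id : e * (s0 n * u n * v n + l n) = - (u n * v n) * (s1 n * ep + sm1 n * em)).
  { assert (e * (s0 n * u n * v n + l n) + u n * v n * (s1 n * ep + sm1 n * em) =
            v n * ((u n * (s1 n * u (S n) + s0 n * u n + sm1 n * u (pred n)) + k n * u n) - l n)
            - u n * ((v n * (s1 n * v (S n) + s0 n * v n + sm1 n * v (pred n)) + k n * v n) - l n))
      by (unfold e, ep, em; ring).
    rewrite <- Eu, <- Ev in H. replace (l n - l n) with 0 in H by ring. lra. }
  assert (huv : 0 < u n * v n) by nra.
  assert (A1 : Rabs e * (s0 n * u n * v n + l n) <= (u n * v n) * sg * (Rabs ep + Rabs em)).
  { assert (Rabs e * (s0 n * u n * v n + l n) = Rabs (e * (s0 n * u n * v n + l n))).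
    { rewrite Rabs_mult. rewrite (Rabs_right (s0 n * u n * v n + l n)); [reflexivity|nra]. }
    rewrite H, Id, Rabs_mult, Rabs_Ropp, Rabs_right by lra.
    rewrite (Rmult_assoc (u n * v n) sg). apply Rmult_le_compat_l; [lra|].
    eapply Rle_trans; [apply Rabs_triang|].
    rewrite !Rabs_mult, (Rabs_right (s1 n)), (Rabs_right (sm1 n)) by lra.
    pose proof (Rabs_pos ep). pose proof (Rabs_pos em). nra. }
  pose proof (Rabs_pos e). pose proof (Rabs_pos ep). pose proof (Rabs_pos em).
  assert (A2 : 2 * sg * (u n * v n) * Rabs e <= (u n * v n) * sg * (Rabs ep + Rabs em)).
  { assert (0 <= Rabs e * (l n - (2 * sg - s0 n) * (u n * v n))) by (apply Rmult_le_pos; lra).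
    assert (Rabs e * (s0 n * u n * v n + l n) - 2 * sg * (u n * v n) * Rabs e
            = Rabs e * (l n - (2 * sg - s0 n) * (u n * v n))) by ring.
    lra. }
  destruct (Rle_lt_dec sg 0) as [hs|hs].
  - assert (sg = 0) by lra. rewrite H2, Rmult_0_r, Rmult_0_l in A1.
    assert (0 < s0 n * u n * v n + l n).
    { assert (0 < s0 n * u n * v n) by (apply Rmult_lt_0_compat; [apply Rmult_lt_0_compat|]; lra). lra. }
    assert (Rabs e <= 0).
    { destruct (Rle_lt_dec (Rabs e) 0) as [hh|hh]; [exact hh|].
      assert (0 < Rabs e * (s0 n * u n * v n + l n)) by (apply Rmult_lt_0_compat; lra). lra. }
    lra.
  - assert (0 < sg * (u n * v n)) by (apply Rmult_lt_0_compat; lra).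
    assert (sg * (u n * v n) * (2 * Rabs e) <= sg * (u n * v n) * (Rabs ep + Rabs em)).
    { replace (sg * (u n * v n) * (2 * Rabs e)) with (2 * sg * (u n * v n) * Rabs e) by ring.
      replace (sg * (u n * v n) * (Rabs ep + Rabs em)) with (u n * v n * sg * (Rabs ep + Rabs em)) by ring.
      exact A2. }
    apply Rmult_le_reg_l with (sg * (u n * v n)); lra.
Qed.
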